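(* Let $n\ge 1$, let $T_{n+2}$ be a tournament (strong preference pattern) on a set of $n+2$ candidates, let $a,b$ be two of these candidates, and let $T_n=T_{n+2}\setminus\{a,b\}$ be the subtournament induced on the remaining $n$ candidates. Then $v(T_{n+2})\le v(T_n)+2$.
   Context: A voter on a finite candidate set $A$ is a linear order (ranking) of $A$. A set of voters is a nonempty finite multiset of voters. A strong preference pattern on $A$ is a tournament $T$ on vertex set $A$. A set of voters $U$ generates $T$ if for every pair of distinct candidates $x,y$, the arc $(x,y)$ is in $T$ if and only if strictly more voters of $U$ rank $x$ above $y$ than rank $y$ above $x$. For a tournament $T$, $v(T)$ denotes the minimum size of a set of voters generating $T$. *)

(* Defs.v *)
From mathcomp Require Import all_boot.
Set Implicit Arguments. Unset Strict Implicit. Unset Printing Implicit Defensive.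

(* A voter on a finite candidate set A is a linear order on A, represented
   by an injective ranking function r : A -> nat;  x is ranked above y
   iff r x < r y.  (Every strict linear order on a finite set arises so.) *)
Record voter (A : finType) := Voter { rank_of : A -> nat; rank_inj : injective rank_of }.

Definition prefers (A : finType) (u : voter A) (x y : A) : bool := rank_of u x < rank_of u y.

Definition tournament (A : finType) (T : rel A) : Prop :=
  (forall x, ~~ T x x) /\ (forall x y, x != y -> T x y (+) T y x).

(* A set of voters: nonempty finite multiset, given as a nonempty list. *)
Definition generates (A : finType) (U : seq (voter A)) (T : rel A) : Prop :=
  0 < size U /\
  forall x y : A, x != y ->
    T x y = (count (fun u => prefers u y x) U < count (fun u => prefers u x y) U).

Definition is_v (A : finType) (T : rel A) (k : nat) : Prop :=
  (exists U, generates U T /\ size U = k) /\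
  (forall U, generates U T -> k <= size U).

Definition rest (A : finType) (a b : A) := {x : A | (x != a) && (x != b)}.
Definition subT (A : finType) (a b : A) (T : rel A) : rel (rest a b) :=
  fun x y => T (val x) (val y).

(* Main.v *)
Require Import Defs.
From mathcomp Require Import all_boot.
From mathcomp Require Import zify.

Section Build.
Variables (A : finType) (T : rel A) (a b : A).
Hypothesis tourT : tournament T.
Hypothesis ab : a != b.
Local Notation R := (rest a b).

Lemma ba : (b == a) = false.
Proof. by rewrite eq_sym (negbTE ab). Qed.

Definition ext (f : R -> nat) (ra rb : nat) (x : A) : nat :=
  if x == a then ra else if x == b then rb else oapp f 0 (insub x).

Lemma ext_val f ra rb (y : R) : ext f ra rb (val y) = f y.
Proof.
have /andP[ya yb] := valP y.
by rewrite /ext (negbTE ya) (negbTE yb) valK.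
Qed.

Lemma ext_a f ra rb : ext f ra rb a = ra.
Proof. by rewrite /ext eqxx. Qed.

Lemma ext_b f ra rb : ext f ra rb b = rb.
Proof. by rewrite /ext ba eqxx. Qed.

Lemma A_cases x : [\/ x = a, x = b | exists y : R, x = val y].
Proof.
case: (eqVneq x a) => [->|xa]; first by constructor 1.
case: (eqVneq x b) => [->|xb]; first by constructor 2.
constructor 3; have h : (x != a) && (x != b) by rewrite xa xb.
by exists (exist _ x h).
Qed.

Lemma ext_inj f ra rb : injective f -> ra != rb ->
  (forall y, f y != ra) -> (forall y, f y != rb) -> injective (ext f ra rb).
Proof.
move=> fi rab fa fb x1 x2.
case: (A_cases x1) => [->|->|[y1 ->]]; case: (A_cases x2) => [->|->|[y2 ->]];
  rewrite ?ext_a ?ext_b ?ext_val // => e.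
- by rewrite e eqxx in rab.
- by move: (fa y2); rewrite e eqxx.
- by rewrite e eqxx in rab.
- by move: (fb y2); rewrite e eqxx.
- by move: (fa y1); rewrite e eqxx.
- by move: (fb y1); rewrite e eqxx.
- by rewrite (fi _ _ e).
Qed.

Definition M := #|{: R}|.
Definition g (y : R) : nat := enum_rank y.
Lemma g_lt y : g y < M. Proof. exact: ltn_ord. Qed.
Definition ca (y : R) := T (val y) a.
Definition cb (y : R) := T (val y) b.
Definition key (y : R) : nat :=
  if ca y then (if cb y then M + g y else g y)
  else (if cb y then 2*M + g y else 3*M + g y).

Lemma key_inj : injective key.
Proof.
move=> y1 y2 e; apply: enum_rank_inj; apply: val_inj.
move: e (g_lt y1) (g_lt y2); rewrite /key /g.
case: (ca y1); case: (cb y1); case: (ca y2); case: (cb y2) => /=; lia.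
Qed.

Lemma key_lt y : key y < 4 * M.
Proof. move: (g_lt y); rewrite /key; case: (ca y); case: (cb y); lia. Qed.

Lemma key_ca y : ca y -> key y < 2 * M.
Proof. move: (g_lt y); rewrite /key => h ->; case: (cb y); lia. Qed.
Lemma key_nca y : ~~ ca y -> 2 * M <= key y.
Proof. move: (g_lt y); rewrite /key => h /negbTE ->; case: (cb y); lia. Qed.
Lemma key_cb y : cb y -> M <= key y < 3 * M.
Proof. move: (g_lt y); rewrite /key => h ->; case: (ca y); lia. Qed.
Lemma key_ncb y : ~~ cb y -> (key y < M) || (3 * M <= key y).
Proof. move: (g_lt y); rewrite /key => h /negbTE ->; case: (ca y); lia. Qed.

Definition r1 := ext (fun y => 4 * key y + 2) (8 * M) (12 * M + 1).
Lemma r1_inj : injective r1.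
Proof.
apply: ext_inj.
- by move=> y1 y2 e; apply: key_inj; lia.
- lia.
- move=> y; lia.
- move=> y; lia.
Qed.
Definition W1 : voter A := Voter r1_inj.

Definition r2 := ext (fun y => 16 * M - 4 * key y) (16 * M + 3) (12 * M + 1).
Lemma r2_inj : injective r2.
Proof.
apply: ext_inj.
- by move=> y1 y2 e; apply: key_inj; move: (key_lt y1) (key_lt y2); lia.
- lia.
- move=> y; lia.
- move=> y; lia.
Qed.
Definition W2 : voter A := Voter r2_inj.
Definition rt (u : voter R) := ext (fun y => rank_of u y + 2)
  (if T a b then 0 else 1) (if T a b then 1 else 0).
Lemma rt_inj u : injective (rt u).
Proof.
apply: ext_inj.
- by move=> y1 y2 e; apply: (@rank_inj _ u); lia.
- by case: (T a b).
- by move=> y; case: (T a b); lia.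
- by move=> y; case: (T a b); lia.
Qed.
Definition top u : voter A := Voter (rt_inj u).

Definition Bd (u : voter R) := (\max_(y : R) rank_of u y).+1.
Lemma Bd_gt u y : rank_of u y < Bd u.
Proof. by rewrite ltnS (leq_bigmax (F := rank_of u)). Qed.
Definition rb (u : voter R) := ext (rank_of u)
  (if T a b then (Bd u).+1 else Bd u) (if T a b then Bd u else (Bd u).+1).
Lemma rb_inj u : injective (rb u).
Proof.
apply: ext_inj.
- exact: rank_inj.
- by case: (T a b); lia.
- by move=> y; move: (Bd_gt u y); case: (T a b); lia.
- by move=> y; move: (Bd_gt u y); case: (T a b); lia.
Qed.
Definition bot u : voter A := Voter (rb_inj u).

Lemma count_map_const (f : voter R -> voter A) x y (c : bool) s :
  (forall u, prefers (f u) x y = c) ->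
  count (fun u => prefers u x y) (map f s) = if c then size s else 0.
Proof. move=> h; elim: s => [|u s IH] /=; first by case: (c). by rewrite IH h; case: (c). Qed.

Lemma count_map_rr (f : voter R -> voter A) s (x y : R) :
  (forall u, prefers (f u) (val x) (val y) = prefers u x y) ->
  count (fun u => prefers u (val x) (val y)) (map f s) = count (fun u => prefers u x y) s.
Proof. move=> h; elim: s => //= u s ->; by rewrite h. Qed.

Lemma top_rr u (x y : R) : prefers (top u) (val x) (val y) = prefers u x y.
Proof. by rewrite /prefers /= /rt !ext_val ltn_add2r. Qed.
Lemma bot_rr u (x y : R) : prefers (bot u) (val x) (val y) = prefers u x y.
Proof. by rewrite /prefers /= /rb !ext_val. Qed.
Lemma top_az u (z : R) : prefers (top u) a (val z) = true.
Proof. by rewrite /prefers /= /rt ext_a ext_val; case: (T a b); lia. Qed.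
Lemma top_za u (z : R) : prefers (top u) (val z) a = false.
Proof. by rewrite /prefers /= /rt ext_a ext_val; case: (T a b); lia. Qed.
Lemma top_bz u (z : R) : prefers (top u) b (val z) = true.
Proof. by rewrite /prefers /= /rt ext_b ext_val; case: (T a b); lia. Qed.
Lemma top_zb u (z : R) : prefers (top u) (val z) b = false.
Proof. by rewrite /prefers /= /rt ext_b ext_val; case: (T a b); lia. Qed.
Lemma bot_az u (z : R) : prefers (bot u) a (val z) = false.
Proof. by rewrite /prefers /= /rb ext_a ext_val; move: (Bd_gt u z); case: (T a b); lia. Qed.
Lemma bot_za u (z : R) : prefers (bot u) (val z) a = true.
Proof. by rewrite /prefers /= /rb ext_a ext_val; move: (Bd_gt u z); case: (T a b); lia. Qed.
Lemma bot_bz u (z : R) : prefers (bot u) b (val z) = false.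
Proof. by rewrite /prefers /= /rb ext_b ext_val; move: (Bd_gt u z); case: (T a b); lia. Qed.
Lemma bot_zb u (z : R) : prefers (bot u) (val z) b = true.
Proof. by rewrite /prefers /= /rb ext_b ext_val; move: (Bd_gt u z); case: (T a b); lia. Qed.
Lemma top_ab u : prefers (top u) a b = T a b.
Proof. by rewrite /prefers /= /rt ext_a ext_b; case: (T a b). Qed.
Lemma top_ba u : prefers (top u) b a = ~~ T a b.
Proof. by rewrite /prefers /= /rt ext_a ext_b; case: (T a b). Qed.
Lemma bot_ab u : prefers (bot u) a b = ~~ T a b.
Proof. by rewrite /prefers /= /rb ext_a ext_b; case: (T a b); lia. Qed.
Lemma bot_ba u : prefers (bot u) b a = T a b.
Proof. by rewrite /prefers /= /rb ext_a ext_b; case: (T a b); lia. Qed.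

Lemma W1_rr (x y : R) : prefers W1 (val x) (val y) = (key x < key y).
Proof. by rewrite /prefers /= /r1 !ext_val; lia. Qed.
Lemma W2_rr (x y : R) : prefers W2 (val x) (val y) = (key y < key x).
Proof. rewrite /prefers /= /r2 !ext_val; move: (key_lt x) (key_lt y); lia. Qed.
Lemma W1_az (z : R) : prefers W1 a (val z) = (2 * M <= key z).
Proof. by rewrite /prefers /= /r1 ext_a ext_val; lia. Qed.
Lemma W1_za (z : R) : prefers W1 (val z) a = (key z < 2 * M).
Proof. by rewrite /prefers /= /r1 ext_a ext_val; lia. Qed.
Lemma W2_az (z : R) : prefers W2 a (val z) = false.
Proof. by rewrite /prefers /= /r2 ext_a ext_val; lia. Qed.
Lemma W2_za (z : R) : prefers W2 (val z) a = true.
Proof. by rewrite /prefers /= /r2 ext_a ext_val; lia. Qed.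
Lemma W1_bz (z : R) : prefers W1 b (val z) = (3 * M <= key z).
Proof. by rewrite /prefers /= /r1 ext_b ext_val; lia. Qed.
Lemma W1_zb (z : R) : prefers W1 (val z) b = (key z < 3 * M).
Proof. by rewrite /prefers /= /r1 ext_b ext_val; lia. Qed.
Lemma W2_bz (z : R) : prefers W2 b (val z) = (key z < M).
Proof. rewrite /prefers /= /r2 ext_b ext_val; move: (key_lt z); lia. Qed.
Lemma W2_zb (z : R) : prefers W2 (val z) b = (M <= key z).
Proof. rewrite /prefers /= /r2 ext_b ext_val; move: (key_lt z); lia. Qed.
Lemma W1_ab : prefers W1 a b = true.
Proof. by rewrite /prefers /= /r1 ext_a ext_b; lia. Qed.
Lemma W1_ba : prefers W1 b a = false.
Proof. by rewrite /prefers /= /r1 ext_a ext_b; lia. Qed.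
Lemma W2_ab : prefers W2 a b = false.
Proof. by rewrite /prefers /= /r2 ext_a ext_b; lia. Qed.
Lemma W2_ba : prefers W2 b a = true.
Proof. by rewrite /prefers /= /r2 ext_a ext_b; lia. Qed.
Lemma Tanti x y : x != y -> T x y -> T y x = false.
Proof. move=> xy h; move: (tourT.2 x y xy); rewrite h; by case: (T y x). Qed.

Lemma gen_crit (U : seq (voter A)) : 0 < size U ->
  (forall x y, x != y -> T x y ->
     count (fun u => prefers u y x) U < count (fun u => prefers u x y) U) ->
  generates U T.
Proof.
move=> s h; split=> // x y xy.
case Txy: (T x y); first by rewrite h.
have Tyx : T y x by move: (tourT.2 x y xy); rewrite Txy.
have yx : y != x by rewrite eq_sym.
have lt := h y x yx Tyx.
by apply/esym/negbTE; rewrite -leqNgt ltnW.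
Qed.

Lemma build U1 U2 : size U1 = (size U2).+1 -> generates (U1 ++ U2) (subT T) ->
  generates (W1 :: W2 :: map top U1 ++ map bot U2) T.
Proof.
move=> hs [_ hg]; apply: gen_crit => // x y xy Txy.
rewrite /= !count_cat.
case: (A_cases x) => [ex|ex|[x' ex]]; subst x;
case: (A_cases y) => [ey|ey|[y' ey]]; subst y.
- by rewrite eqxx in xy.
- rewrite W1_ab W2_ab W1_ba W2_ba (count_map_const _ _ _ _ _ top_ab) (count_map_const _ _ _ _ _ top_ba)
    (count_map_const _ _ _ _ _ bot_ab) (count_map_const _ _ _ _ _ bot_ba) Txy /= hs.
set s2 := size U2; lia.
- have ny : ~~ ca y' by rewrite /ca Tanti.
  have := key_nca _ ny.
  rewrite W1_az W2_az W1_za W2_za (count_map_const _ _ _ _ _ (top_az ^~ y'))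
    (count_map_const _ _ _ _ _ (top_za ^~ y')) (count_map_const _ _ _ _ _ (bot_az ^~ y'))
    (count_map_const _ _ _ _ _ (bot_za ^~ y')) /= ?hs; set s2 := size U2; lia.
- have Tba : T a b = false by rewrite Tanti // eq_sym.
  rewrite W1_ab W2_ab W1_ba W2_ba (count_map_const _ _ _ _ _ top_ab) (count_map_const _ _ _ _ _ top_ba)
    (count_map_const _ _ _ _ _ bot_ab) (count_map_const _ _ _ _ _ bot_ba) Tba /= ?hs; set s2 := size U2; lia.
- by rewrite eqxx in xy.
- have ny : ~~ cb y' by rewrite /cb Tanti.
  have := key_ncb _ ny.
  rewrite W1_bz W2_bz W1_zb W2_zb (count_map_const _ _ _ _ _ (top_bz ^~ y'))
    (count_map_const _ _ _ _ _ (top_zb ^~ y')) (count_map_const _ _ _ _ _ (bot_bz ^~ y'))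
    (count_map_const _ _ _ _ _ (bot_zb ^~ y')) /= ?hs; set s2 := size U2; lia.
- have ny : ca x' by [].
  have := key_ca _ ny.
  rewrite W1_az W2_az W1_za W2_za (count_map_const _ _ _ _ _ (top_az ^~ x'))
    (count_map_const _ _ _ _ _ (top_za ^~ x')) (count_map_const _ _ _ _ _ (bot_az ^~ x'))
    (count_map_const _ _ _ _ _ (bot_za ^~ x')) /= ?hs; set s2 := size U2; lia.
- have ny : cb x' by [].
  have := key_cb _ ny.
  rewrite W1_bz W2_bz W1_zb W2_zb (count_map_const _ _ _ _ _ (top_bz ^~ x'))
    (count_map_const _ _ _ _ _ (top_zb ^~ x')) (count_map_const _ _ _ _ _ (bot_bz ^~ x'))
    (count_map_const _ _ _ _ _ (bot_zb ^~ x')) /= ?hs; set s2 := size U2; lia.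
- have xy' : x' != y' by apply: contraNneq xy => ->.
  have := hg x' y' xy'; rewrite /subT Txy !count_cat => /esym.
  have kne : key x' != key y' by apply: contraNneq xy' => /key_inj ->.
  rewrite W1_rr W2_rr W1_rr W2_rr (count_map_rr _ _ _ _ (top_rr ^~ x' ^~ y'))
    (count_map_rr _ _ _ _ (top_rr ^~ y' ^~ x')) (count_map_rr _ _ _ _ (bot_rr ^~ x' ^~ y'))
    (count_map_rr _ _ _ _ (bot_rr ^~ y' ^~ x')).
  move: kne; lia.
Qed.
End Build.

Lemma pref_neg (B : finType) (u : voter B) x y : x != y -> prefers u y x = ~~ prefers u x y.
Proof.
move=> xy; rewrite /prefers.
case: (ltngtP (rank_of u x) (rank_of u y)) => // e.
by move/rank_inj: e xy => ->; rewrite eqxx.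
Qed.

Lemma count_pref_sum (B : finType) (U : seq (voter B)) x y : x != y ->
  count (fun u => prefers u x y) U + count (fun u => prefers u y x) U = size U.
Proof. move=> xy; elim: U => //= u U IH; rewrite (@pref_neg _ u _ _ xy); case: (prefers u x y) => /=; lia. Qed.

Lemma drop_one (B : finType) (S : rel B) (u : voter B) (U0 : seq (voter B)) :
  tournament S -> generates (u :: U0) S -> ~~ odd (size (u :: U0)) -> generates U0 S.
Proof.
move=> tS [_ hg] ev.
have := odd_double_half (size (u :: U0)); rewrite (negbTE ev) add0n -mul2n => eh.
split; first by move: eh => /=; lia.
move=> x y xy.
have yx : y != x by rewrite eq_sym.
have := tS.2 x y xy; rewrite (hg x y xy) (hg y x yx) /= (@pref_neg _ u _ _ yx).
have := @count_pref_sum _ U0 _ _ xy; move: eh => /=.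
case: (prefers u x y) => /=;
set c1 := count _ U0; set c2 := count _ U0;
case: (ltngtP c1 c2); case: (ltngtP c1.+1 c2); case: (ltngtP c1 c2.+1);
case: (ltngtP (c1.+1) c2); lia.
Qed.

Lemma subtour (A : finType) (T : rel A) (a b : A) :
  tournament T -> tournament (subT (a:=a) (b:=b) T).
Proof.
move=> tT; split; first by move=> x; rewrite /subT tT.1.
move=> x y xy; rewrite /subT; apply: tT.2; by rewrite (inj_eq val_inj).
Qed.

Lemma odd_case (A : finType) (T : rel A) (a b : A) (tT : tournament T) (ab : a != b)
  (U : seq (voter (rest a b))) :
  generates U (subT T) -> odd (size U) ->
  exists U' : seq (voter A), generates U' T /\ size U' = (size U).+2.
Proof.
move=> gU od.
have := odd_double_half (size U); rewrite od -mul2n.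
set m := (size U)./2 => hsz.
have hs : size (take m.+1 U) = (size (drop m.+1 U)).+1.
  rewrite size_takel ?size_drop; lia.
have gc : generates (take m.+1 U ++ drop m.+1 U) (subT T) by rewrite cat_take_drop.
have g' := @build _ _ _ _ tT ab _ _ hs gc.
eexists; split; first exact: g'.
by rewrite /= size_cat !size_map -size_cat cat_take_drop.
Qed.

Theorem theorem1 (n : nat) (A : finType) (T : rel A) (a b : A) :
  1 <= n -> #|A| = n.+2 -> tournament T -> a != b ->
  forall vn : nat, is_v (@subT A a b T) vn ->
  forall vn2 : nat, is_v T vn2 -> vn2 <= vn + 2.
Proof.
move=> n1 cA tT ab vn [[U [gU sU]] _] vn2 [_ minT].
case od: (odd (size U)).
  have [U' [g' s']] := @odd_case _ _ _ _ tT ab _ gU od.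
  by apply: leq_trans (minT _ g') _; rewrite s' -sU addn2.
case: U gU sU od => [|u U0] gU sU od; first by case: gU.
have g0 := @drop_one _ _ _ _ (@subtour _ _ a b tT) gU (negbT od).
have od0 : odd (size U0) by move: od => /=; case: (odd (size U0)).
have [U' [g' s']] := @odd_case _ _ _ _ tT ab _ g0 od0.
by apply: leq_trans (minT _ g') _; rewrite s' -sU /=; set k := size U0; lia.
Qed.
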